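(* For $\mathbf{x}=(x_1,\dots,x_N)^{\mathrm T}\in\mathbb{R}^N$ define $$\ell_{\mathrm{bbin}}(\mathbf{x})=N\sum_{n=1}^N\frac{1}{(1+x_n^2)^2}-\Big(\sum_{n=1}^N\frac{1}{1+x_n^2}\Big)^2.$$ Then $\ell_{\mathrm{bbin}}(\mathbf{x})\ge0$ for all $\mathbf{x}$, and $\ell_{\mathrm{bbin}}(\mathbf{x})=0$ if and only if $\mathbf{x}\in\{-\alpha,\alpha\}^N$ for some $\alpha\in\mathbb{R}$. Furthermore, $\ell_{\mathrm{bbin}}$ has no spurious stationary points: $\nabla\ell_{\mathrm{bbin}}(\mathbf{x})=\mathbf{0}$ holds only if $\mathbf{x}\in\{-\alpha,\alpha\}^N$ for some $\alpha\in\mathbb{R}$.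
   Context: A spurious stationary point of a differentiable function $\ell$ whose zero set is $\mathcal{X}$ is a point $\mathbf{x}\notin\mathcal{X}$ with $\nabla\ell(\mathbf{x})=\mathbf{0}$. *)

(* Defs.v *)
From Stdlib Require Import Reals List.
From Coquelicot Require Import Coquelicot.
Open Scope R_scope.

(* A point of R^N is represented as x : nat -> R, of which only the
   coordinates x 0, ..., x (N-1) matter. *)

Definition fsum (N : nat) (f : nat -> R) : R :=
  fold_right Rplus 0 (map f (seq 0 N)).

Definition l_bbin (N : nat) (x : nat -> R) : R :=
  INR N * fsum N (fun n => 1 / (1 + x n ^ 2) ^ 2)
  - (fsum N (fun n => 1 / (1 + x n ^ 2))) ^ 2.

Definition upd (x : nat -> R) (k : nat) (t : R) : nat -> R :=
  fun n => if Nat.eqb n k then x n + t else x n.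

Definition has_partial (f : (nat -> R) -> R) (x : nat -> R) (k : nat) (d : R) : Prop :=
  is_derive (fun t => f (upd x k t)) 0 d.

Definition grad_zero (N : nat) (f : (nat -> R) -> R) (x : nat -> R) : Prop :=
  forall k, (k < N)%nat -> has_partial f x k 0.

Definition in_pm (N : nat) (a : R) (x : nat -> R) : Prop :=
  forall n, (n < N)%nat -> x n = a \/ x n = - a.

(* Main.v *)
Require Import Defs.
From Stdlib Require Import Reals List Lra Psatz.
From Coquelicot Require Import Coquelicot.
Open Scope R_scope.

Lemma fr_init (a : R) (l : list R) : fold_right Rplus a l = fold_right Rplus 0 l + a.
Proof. induction l; simpl; [lra| rewrite IHl; lra]. Qed.

Lemma fsum_S N f : fsum (S N) f = fsum N f + f N.
Proof. unfold fsum. rewrite seq_S, map_app, fold_right_app. simpl. rewrite fr_init. lra. Qed.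

Lemma fsum_ext N f g : (forall n, (n < N)%nat -> f n = g n) -> fsum N f = fsum N g.
Proof. induction N; intros H; [reflexivity|]. rewrite !fsum_S, IHN, H; auto; lia. Qed.

Definition A N (y : nat -> R) := INR N * fsum N (fun n => y n ^ 2) - (fsum N y) ^ 2.

Lemma A_S N y : A (S N) y = A N y + fsum N (fun i => (y i - y N)^2).
Proof.
  unfold A. rewrite !fsum_S, S_INR.
  assert (H: forall M, fsum M (fun i => (y i - y N)^2) =
     fsum M (fun n => y n ^ 2) - 2 * y N * fsum M y + INR M * (y N)^2).
  { induction M; [unfold fsum; simpl; lra|]. rewrite !fsum_S, IHM, S_INR. ring. }
  rewrite H. ring.
Qed.

Lemma fsum_nonneg N f : (forall n, 0 <= f n) -> 0 <= fsum N f.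
Proof. intros H; induction N; [unfold fsum; simpl; lra|]. rewrite fsum_S. specialize (H N); lra. Qed.

Lemma fsum_zero N f : (forall n, 0 <= f n) -> fsum N f = 0 -> forall n, (n < N)%nat -> f n = 0.
Proof.
  intros H; induction N; intros E n Hn; [lia|]. rewrite fsum_S in E.
  pose proof (fsum_nonneg N f H). pose proof (H N).
  destruct (Nat.eq_dec n N); subst; [lra|]. apply IHN; [lra|lia].
Qed.

Lemma A_nonneg N y : 0 <= A N y.
Proof.
  induction N; [unfold A, fsum; simpl; lra|]. rewrite A_S.
  pose proof (fsum_nonneg N (fun i => (y i - y N)^2) ltac:(intros; apply pow2_ge_0)). lra.
Qed.

Lemma A_zero N y : A N y = 0 -> forall n, (n < N)%nat -> y n = y 0%nat.
Proof.
  induction N; intros E n Hn; [lia|]. rewrite A_S in E.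
  pose proof (A_nonneg N y).
  pose proof (fsum_nonneg N (fun i => (y i - y N)^2) ltac:(intros; apply pow2_ge_0)).
  assert (E1 : A N y = 0) by lra.
  assert (E2 : fsum N (fun i => (y i - y N)^2) = 0) by lra.
  pose proof (fsum_zero _ _ ltac:(intros; apply pow2_ge_0) E2) as Z.
  destruct (Nat.eq_dec n N).
  - subst. destruct N; [reflexivity|]. specialize (Z 0%nat ltac:(lia)). simpl in Z. nra.
  - apply IHN; auto; lia.
Qed.

Lemma fsum_const N c : fsum N (fun _ => c) = INR N * c.
Proof. induction N; [unfold fsum; simpl; lra|]. rewrite fsum_S, IHN, S_INR; ring. Qed.

Definition yb (x : nat -> R) n := 1 / (1 + x n ^ 2).

Lemma l_A N x : l_bbin N x = A N (yb x).
Proof.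
  unfold l_bbin, A, yb. f_equal. f_equal. apply fsum_ext. intros.
  assert (0 < 1 + x n ^ 2) by nra. field. lra.
Qed.

Lemma fsum_expand N y c d :
  fsum N (fun k => (1 - y k) * (c * y k - d)) =
  c * fsum N y - INR N * d - c * fsum N (fun n => y n ^ 2) + d * fsum N y.
Proof. induction N; [unfold fsum; simpl; lra|]. rewrite !fsum_S, IHN, S_INR. ring. Qed.

Lemma dconst (c x : R) : is_derive (fun _ : R => c) x 0.
Proof. apply is_derive_Reals, derivable_pt_lim_const. Qed.

Lemma is_derive_fsum N (g : nat -> R -> R) (g' : nat -> R) :
  (forall n, (n < N)%nat -> is_derive (g n) 0 (g' n)) ->
  is_derive (fun t => fsum N (fun n => g n t)) 0 (fsum N g').
Proof.
  induction N; intros H.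
  - unfold fsum; simpl. apply dconst.
  - rewrite fsum_S. apply (is_derive_ext (fun t => fsum N (fun n => g n t) + g N t)).
    { intros; rewrite fsum_S; reflexivity. }
    apply (is_derive_plus (fun t => fsum N (fun n => g n t)) (g N)).
    + apply IHN; intros; apply H; lia.
    + apply H; lia.
Qed.

Lemma fsum_delta N k f : (k < N)%nat -> fsum N (fun n => if Nat.eqb n k then f n else 0) = f k.
Proof.
  induction N; intros Hk; [lia|]. rewrite fsum_S.
  destruct (Nat.eq_dec k N).
  - subst. rewrite Nat.eqb_refl.
    rewrite (fsum_ext _ _ (fun _ => 0)). rewrite fsum_const; ring.
    intros n Hn. destruct (Nat.eqb_spec n N); [lia|reflexivity].
  - rewrite IHN by lia. destruct (Nat.eqb_spec N k); [lia|]. ring.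
Qed.

Lemma term_deriv (x : nat -> R) k n (p : R -> R) (dp : R -> R) :
  (forall u, is_derive p u (dp u)) ->
  is_derive (fun t => p (upd x k t n)) 0 (if Nat.eqb n k then dp (x n) else 0).
Proof.
  intros Hp. unfold upd. destruct (Nat.eqb n k).
  - assert (H1: is_derive (fun t => x n + t) 0 1) by (auto_derive; auto; ring).
    pose proof (is_derive_comp p _ 0 _ _ (Hp (x n + 0)) H1) as H.
    replace (x n + 0) with (x n) in H by ring.
    replace (dp (x n)) with (scal (1:R) (dp (x n))); [exact H|].
    unfold scal; simpl; unfold mult; simpl; ring.
  - apply dconst.
Qed.

Definition pp (u : R) := 1 / (1 + u ^ 2) ^ 2.
Definition dpp (u : R) := -4 * u / (1 + u ^ 2) ^ 3.
Definition qq (u : R) := 1 / (1 + u ^ 2).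
Definition dqq (u : R) := -2 * u / (1 + u ^ 2) ^ 2.

Lemma pp_d u : is_derive pp u (dpp u).
Proof. unfold pp, dpp. assert (0 < 1 + u^2) by nra. auto_derive; [intro Z; nra|]. field. lra. Qed.
Lemma qq_d u : is_derive qq u (dqq u).
Proof. unfold qq, dqq. assert (0 < 1 + u^2) by nra. auto_derive; [intro Z; nra|]. field. lra. Qed.

Lemma grad_l N x k : (k < N)%nat ->
  has_partial (l_bbin N) x k
    (INR N * dpp (x k) - 2 * fsum N (yb x) * dqq (x k)).
Proof.
  intros Hk. unfold has_partial.
  pose proof (is_derive_fsum N (fun n t => pp (upd x k t n)) _
     (fun n _ => term_deriv x k n pp dpp pp_d)) as HF.
  pose proof (is_derive_fsum N (fun n t => qq (upd x k t n)) _
     (fun n _ => term_deriv x k n qq dqq qq_d)) as HG.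
  rewrite fsum_delta in HF, HG by exact Hk.
  pose proof (is_derive_scal _ 0 (INR N) _ HF) as H1.
  pose proof (is_derive_pow _ 2 0 _ HG) as H2.
  pose proof (is_derive_minus _ _ 0 _ _ H1 H2) as H3.
  assert (E: fsum N (fun n => qq (upd x k 0 n)) = fsum N (yb x)).
  { apply fsum_ext. intros n _. unfold qq, yb, upd. destruct (Nat.eqb n k); f_equal; f_equal; f_equal; ring. }
  simpl in H3. rewrite E in H3.
  replace (INR N * dpp (x k) - 2 * fsum N (yb x) * dqq (x k)) with
    (minus (INR N * dpp (x k)) ((1 + 1) * dqq (x k) * (fsum N (yb x) * 1)))
    by (unfold minus, plus, opp; simpl; ring).
  eapply is_derive_ext; [|exact H3].
  intros t. unfold l_bbin. reflexivity.
Qed.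

Lemma part2 N x : l_bbin N x = 0 <-> exists a : R, in_pm N a x.
Proof.
  rewrite l_A. split.
  - intros H. exists (x 0%nat). intros n Hn.
    pose proof (A_zero N _ H n Hn) as E. unfold yb in E.
    pose proof (pow2_ge_0 (x n)). pose proof (pow2_ge_0 (x 0%nat)).
    assert (0 < 1 + x n ^ 2) by lra. assert (0 < 1 + x 0%nat ^ 2) by lra.
    assert (E2 : x n ^ 2 = x 0%nat ^ 2).
    { assert (1 + x n ^ 2 = 1 + x 0%nat ^ 2); [|lra].
      rewrite <- (Rinv_inv (1 + x n ^2)), <- (Rinv_inv (1 + x 0%nat ^2)).
      f_equal. unfold Rdiv in E. rewrite !Rmult_1_l in E. exact E. }
    assert (Z: (x n - x 0%nat) * (x n + x 0%nat) = 0) by (replace ((x n - x 0%nat) * (x n + x 0%nat)) with (x n ^ 2 - x 0%nat ^ 2) by ring; lra).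
    destruct (Rmult_integral _ _ Z); [left|right]; lra.
  - intros [a Ha]. unfold A.
    rewrite (fsum_ext N (fun n => yb x n ^ 2) (fun _ => (1 / (1 + a^2))^2)), (fsum_ext N (yb x) (fun _ => 1 / (1 + a^2))).
    all: try (rewrite !fsum_const; ring).
    all: intros n Hn; unfold yb; destruct (Ha n Hn) as [E|E]; cbv beta; rewrite E; try reflexivity;
      replace ((-a)^2) with (a^2) by ring; reflexivity.
Qed.

Theorem mainTheorem10 (N : nat) :
  (forall x : nat -> R, 0 <= l_bbin N x) /\
  (forall x : nat -> R, l_bbin N x = 0 <-> exists a : R, in_pm N a x) /\
  (forall x : nat -> R, grad_zero N (l_bbin N) x -> exists a : R, in_pm N a x).
Proof.
  split; [intros x; rewrite l_A; apply A_nonneg|].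
  split; [apply part2|].
  intros x G. apply part2. rewrite l_A.
  set (S := fsum N (yb x)).
  assert (Hk : forall k, (k < N)%nat -> (1 - yb x k) * (INR N * yb x k - S) = 0).
  { intros k Hk.
    pose proof (grad_l N x k Hk) as D1. pose proof (G k Hk) as D0.
    unfold has_partial in D0, D1.
    apply is_derive_unique in D0, D1. rewrite D0 in D1. fold S in D1.
    unfold dpp, dqq, yb in *. clearbody S. clear D0 G.
    remember (x k) as u eqn:Hu. clear Hu.
    pose proof (pow2_ge_0 u). assert (0 < 1 + u ^ 2) by lra.
    remember (1 + u ^ 2) as w eqn:Hw.
    assert (E : -4 / w^3 * (u * (INR N - S * w)) = 0).
    { rewrite D1. field. lra. }
    apply Rmult_integral in E. destruct E as [E|E].
    - exfalso. assert (0 < w^3) by (apply pow_lt; lra).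
      assert (0 < 4 / w^3) by (apply Rdiv_lt_0_compat; lra).
      unfold Rdiv in *. lra.
    - replace ((1 - 1 / w) * (INR N * (1 / w) - S)) with ((w - 1) * (INR N - S * w) / w ^ 2)
        by (field; lra).
      replace (w - 1) with (u * u) by (rewrite Hw; ring).
      rewrite Rmult_assoc, E. field. lra. }
  pose proof (fsum_expand N (yb x) (INR N) S) as X.
  rewrite (fsum_ext N _ (fun _ => 0)) in X by exact Hk.
  rewrite fsum_const, Rmult_0_r in X. unfold A. fold S. replace (S^2) with (S*S) by ring. fold S in X. lra.
Qed.
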